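(* Let $a_k=2^k+1$ for $k\ge1$, and $S_n(\omega)=\sum_{k=1}^n\cos(2\pi a_k\omega)$, $\omega\in[0,1]$, viewed as a random variable on $[0,1]$ with Lebesgue measure. Then $\kappa_m(S_n)=0$ for every odd $m\ge1$ and every $n\ge1$, and $$\kappa_2(S_n)=\frac n2\ \ (n\ge1),\qquad \kappa_4(S_n)=\frac{-3n+28}{8}\ \ (n\ge4),\qquad \kappa_6(S_n)=\frac{45n^2+380n-1875}{16}\ \ (n\ge7).$$
   Context: For a bounded random variable $X$, its $m$-th cumulant is $\kappa_m(X)=\frac{d^m}{dt^m}\log\mathbb E[e^{tX}]\big|_{t=0}$. *)

(* Defs.v *)
From Stdlib Require Import Reals.
From Coquelicot Require Import Coquelicot.
Open Scope R_scope.

Definition a (k : nat) : R := 2 ^ k + 1.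

Fixpoint S (n : nat) (w : R) : R :=
  match n with
  | O => 0
  | Datatypes.S n' => S n' w + cos (2 * PI * a n * w)
  end.

(* moment generating function of S_n under Lebesgue measure on [0,1]:
   E[exp(t S_n)] = int_0^1 exp(t S_n(w)) dw  (S_n is continuous, so the
   Riemann integral coincides with the Lebesgue integral) *)
Definition mgf (n : nat) (t : R) : R := RInt (fun w => exp (t * S n w)) 0 1.

Definition kappa (m n : nat) : R := Derive_n (fun t => ln (mgf n t)) m 0.

(* Main.v *)
Require Import Defs.
From Stdlib Require Import Reals.
From Coquelicot Require Import Coquelicot.
From Stdlib Require Import ZArith Lia Lra List Bool.
Import ListNotations.
Open Scope R_scope.

Section Comb.
Local Open Scope Z_scope.

Definition AZ (i : nat) : Z := 2 ^ Z.of_nat i + 1.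

Fixpoint sumZ (f : nat -> Z) (n : nat) : Z :=
  match n with O => 0 | Datatypes.S m => sumZ f m + f (Datatypes.S m) end.

Fixpoint sum0 (f : nat -> Z) (k : nat) : Z :=
  match k with O => f O | Datatypes.S m => sum0 f m + f (Datatypes.S m) end.

Fixpoint binZ (n k : nat) : Z :=
  match n, k with
  | _, O => 1
  | O, Datatypes.S _ => 0
  | Datatypes.S n', Datatypes.S k' => binZ n' k' + binZ n' (Datatypes.S k')
  end.

Fixpoint Ncnt (n : nat) (c : Z) (k : nat) : Z :=
  match k with
  | O => if Z.eqb c 0 then 1 else 0
  | Datatypes.S k' => sumZ (fun i => Ncnt n (c + AZ i) k' + Ncnt n (c - AZ i) k') n
  end.

Lemma binZ_big : forall n k, (n < k)%nat -> binZ n k = 0.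
Proof.
  induction n; intros k H; destruct k; simpl; try lia.
  rewrite !IHn; lia.
Qed.

Lemma sumZ_ext : forall f g n, (forall i, (1 <= i <= n)%nat -> f i = g i) -> sumZ f n = sumZ g n.
Proof.
  induction n; intros H; simpl; auto.
  rewrite IHn by (intros; apply H; lia). rewrite H by lia. reflexivity.
Qed.
Lemma sumZ_plus : forall f g n, sumZ (fun i => f i + g i) n = sumZ f n + sumZ g n.
Proof. induction n; simpl; lia. Qed.
Lemma sumZ_scal : forall c f n, sumZ (fun i => c * f i) n = c * sumZ f n.
Proof. induction n; simpl; lia. Qed.
Lemma sumZ_zero : forall n, sumZ (fun _ => 0) n = 0.
Proof. induction n; simpl; lia. Qed.

Lemma sum0_ext : forall f g k, (forall j, (j <= k)%nat -> f j = g j) -> sum0 f k = sum0 g k.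
Proof.
  induction k; intros H; simpl; auto.
  rewrite IHk by (intros; apply H; lia). rewrite H by lia. reflexivity.
Qed.
Lemma sum0_plus : forall f g k, sum0 (fun i => f i + g i) k = sum0 f k + sum0 g k.
Proof. induction k; simpl; lia. Qed.
Lemma sum0_scal : forall c f k, sum0 (fun i => c * f i) k = c * sum0 f k.
Proof. induction k; simpl; lia. Qed.
Lemma sum0_left : forall f k, sum0 f (Datatypes.S k) = f O + sum0 (fun j => f (Datatypes.S j)) k.
Proof. induction k; simpl in *; lia. Qed.
Lemma sumZ_sum0 : forall (F : nat -> nat -> Z) n k,
  sumZ (fun i => sum0 (fun j => F i j) k) n = sum0 (fun j => sumZ (fun i => F i j) n) k.
Proof.
  induction n; intros; simpl.
  - induction k; simpl; lia.
  - rewrite IHn, <- sum0_plus. reflexivity.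
Qed.

Lemma pascal0 : forall h k,
  sum0 (fun j => binZ k j * (h j + h (Datatypes.S j))) k =
  sum0 (fun j => binZ (Datatypes.S k) j * h j) (Datatypes.S k).
Proof.
  intros h k.
  rewrite sum0_left. simpl binZ at 1.
  assert (E : sum0 (fun j => binZ (Datatypes.S k) (Datatypes.S j) * h (Datatypes.S j)) k =
     sum0 (fun j => binZ k j * h (Datatypes.S j)) k +
     sum0 (fun j => binZ k (Datatypes.S j) * h (Datatypes.S j)) k).
  { rewrite <- sum0_plus. apply sum0_ext. intros. simpl. ring. }
  rewrite E.
  assert (E2 : sum0 (fun j => binZ k j * h j) k = h O +
      sum0 (fun j => binZ k (Datatypes.S j) * h (Datatypes.S j)) k).
  { destruct k.
    - cbn [sum0 binZ]; ring.
    - rewrite (sum0_left (fun j => binZ (Datatypes.S k) j * h j)).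
      change (sum0 (fun j => binZ (Datatypes.S k) (Datatypes.S j) * h (Datatypes.S j)) (Datatypes.S k))
        with (sum0 (fun j => binZ (Datatypes.S k) (Datatypes.S j) * h (Datatypes.S j)) k
              + binZ (Datatypes.S k) (Datatypes.S (Datatypes.S k)) * h (Datatypes.S (Datatypes.S k))).
      rewrite (binZ_big (Datatypes.S k) (Datatypes.S (Datatypes.S k))) by lia.
      change (binZ (Datatypes.S k) 0) with 1. ring. }
  transitivity (sum0 (fun j => binZ k j * h j) k + sum0 (fun j => binZ k j * h (Datatypes.S j)) k).
  { rewrite <- sum0_plus. apply sum0_ext. intros; ring. }
  rewrite E2. change (binZ (Datatypes.S k) 0) with 1. ring.
Qed.

Definition inner n c a j m := sum0 (fun p => binZ j p * Ncnt n (c + (2 * Z.of_nat p - Z.of_nat j) * a) m) j.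
Definition Rhs n c a k := sum0 (fun j => binZ k j * inner n c a j (k - j)) k.

Lemma Nrec : forall n k c, Ncnt (Datatypes.S n) c k = Rhs n c (AZ (Datatypes.S n)) k.
Proof.
  intros n k. set (a := AZ (Datatypes.S n)). induction k; intro c.
  - unfold Rhs, inner. cbn [sum0 binZ]. rewrite Nat.sub_0_r.
    replace (c + (2 * Z.of_nat 0 - Z.of_nat 0) * a) with c by (simpl; ring).
    cbn [Ncnt]. destruct (c =? 0); reflexivity.
  - assert (P1 : sumZ (fun i => Ncnt (Datatypes.S n) (c + AZ i) k + Ncnt (Datatypes.S n) (c - AZ i) k) n
                 = sum0 (fun j => binZ k j * inner n c a j (Datatypes.S k - j)) k).
    { transitivity (sumZ (fun i => sum0 (fun j => binZ k j * sum0 (fun p => binZ j p *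
          (Ncnt n (c + (2 * Z.of_nat p - Z.of_nat j) * a + AZ i) (k-j) +
           Ncnt n (c + (2 * Z.of_nat p - Z.of_nat j) * a - AZ i) (k-j))) j) k) n).
      - apply sumZ_ext; intros i _. rewrite !IHk. unfold Rhs, inner. rewrite <- sum0_plus.
        apply sum0_ext; intros j _. rewrite <- Z.mul_add_distr_l, <- sum0_plus. f_equal.
        apply sum0_ext; intros p _. rewrite <- Z.mul_add_distr_l. f_equal.
        f_equal; f_equal; ring.
      - rewrite sumZ_sum0. apply sum0_ext; intros j Hj. rewrite sumZ_scal. f_equal.
        unfold inner. rewrite sumZ_sum0. apply sum0_ext; intros p _. rewrite sumZ_scal. f_equal.
        replace (Datatypes.S k - j)%nat with (Datatypes.S (k - j)) by lia.
        cbn [Ncnt]. reflexivity. }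
    assert (P2 : Ncnt (Datatypes.S n) (c + a) k + Ncnt (Datatypes.S n) (c - a) k
                 = sum0 (fun j => binZ k j * inner n c a (Datatypes.S j) (Datatypes.S k - Datatypes.S j)) k).
    { rewrite !IHk. unfold Rhs. rewrite <- sum0_plus. apply sum0_ext; intros j Hj.
      rewrite <- Z.mul_add_distr_l. f_equal.
      unfold inner. replace (Datatypes.S k - Datatypes.S j)%nat with (k - j)%nat by lia.
      rewrite <- (pascal0 (fun p => Ncnt n (c + (2 * Z.of_nat p - Z.of_nat (Datatypes.S j)) * a) (k - j)) j).
      rewrite <- sum0_plus. apply sum0_ext; intros p _. rewrite <- Z.mul_add_distr_l. f_equal.
      rewrite Z.add_comm. f_equal; f_equal; rewrite ?Nat2Z.inj_succ; ring. }
    cbn [Ncnt sumZ]. fold a. rewrite P1, P2, <- sum0_plus.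
    unfold Rhs. rewrite <- (pascal0 (fun j => inner n c a j (Datatypes.S k - j)) k).
    apply sum0_ext; intros; ring.
Qed.

Lemma AZ_pos : forall i, 0 < AZ i.
Proof. intros. unfold AZ. pose proof (Z.pow_pos_nonneg 2 (Z.of_nat i)). lia. Qed.
Lemma AZ_mono : forall i n, (i <= n)%nat -> AZ i <= AZ n.
Proof. intros. unfold AZ. pose proof (Z.pow_le_mono_r 2 (Z.of_nat i) (Z.of_nat n)). lia. Qed.

Lemma Nbound : forall n k c, Z.of_nat k * AZ n < Z.abs c -> Ncnt n c k = 0.
Proof.
  intros n k. induction k; intros c H.
  - cbn [Ncnt]. destruct (Z.eqb_spec c 0); subst; rewrite ?Nat2Z.inj_0 in *; lia.
  - cbn [Ncnt]. rewrite <- (sumZ_zero n). apply sumZ_ext. intros i Hi.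
    pose proof (AZ_mono i n ltac:(lia)). pose proof (AZ_pos i).
    rewrite Nat2Z.inj_succ, Z.mul_succ_l in H.
    set (P := Z.of_nat k * AZ n) in *.
    rewrite !IHk; [lia| |]; destruct (Z.abs_spec c), (Z.abs_spec (c - AZ i)), (Z.abs_spec (c + AZ i)); lia.
Qed.

Lemma Npar : forall n k c q, c + Z.of_nat k = 2 * q + 1 -> Ncnt n c k = 0.
Proof.
  intros n k. induction k; intros c q H.
  - cbn [Ncnt]. destruct (Z.eqb_spec c 0); subst; rewrite ?Nat2Z.inj_0 in *; lia.
  - cbn [Ncnt]. rewrite <- (sumZ_zero n). apply sumZ_ext. intros i Hi.
    destruct i as [|i]; [lia|].
    assert (E : AZ (Datatypes.S i) = 2 * 2 ^ Z.of_nat i + 1).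
    { unfold AZ. rewrite Nat2Z.inj_succ, Z.pow_succ_r by lia. ring. }
    rewrite Nat2Z.inj_succ in H.
    rewrite (IHk _ (q + 2 ^ Z.of_nat i)), (IHk _ (q - 2 ^ Z.of_nat i - 1)); lia.
Qed.

Definition stepF (V : nat -> Z -> Z -> Z) (k : nat) (u r : Z) : Z :=
  sum0 (fun j => binZ k j * sum0 (fun p => binZ j p *
    (if Z.abs (2 * u + 2 * Z.of_nat p - Z.of_nat j) <=? 3
     then V (k - j)%nat (2 * u + 2 * Z.of_nat p - Z.of_nat j) (r + 2 * Z.of_nat p - Z.of_nat j)
     else 0)) j) k.

Definition Nv (n : nat) (k : nat) (u r : Z) : Z := Ncnt n (u * 2 ^ (Z.of_nat n + 1) + r) k.

Lemma Vrec : forall n k u r, (3 <= n)%nat -> Z.abs r + Z.of_nat k <= 6 ->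
  Nv (Datatypes.S n) k u r = stepF (Nv n) k u r.
Proof.
  intros n k u r Hn Hr. unfold Nv. rewrite Nrec. unfold Rhs, inner, stepF.
  apply sum0_ext; intros j Hj. f_equal. apply sum0_ext; intros p Hp. f_equal.
  set (Y := 2 ^ Z.of_nat n).
  assert (HY : 8 <= Y).
  { unfold Y. change 8 with (2 ^ Z.of_nat 3). apply Z.pow_le_mono_r; lia. }
  assert (E : u * 2 ^ (Z.of_nat (Datatypes.S n) + 1) + r +
     (2 * Z.of_nat p - Z.of_nat j) * AZ (Datatypes.S n) =
     (2 * u + 2 * Z.of_nat p - Z.of_nat j) * 2 ^ (Z.of_nat n + 1) + (r + 2 * Z.of_nat p - Z.of_nat j)).
  { unfold AZ. rewrite Nat2Z.inj_succ, <- Z.add_1_r.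
    rewrite !Z.pow_add_r by lia. fold Y. ring. }
  rewrite E. clear E.
  destruct (Z.leb_spec (Z.abs (2 * u + 2 * Z.of_nat p - Z.of_nat j)) 3); [reflexivity|].
  apply Nbound.
  set (U := 2 * u + 2 * Z.of_nat p - Z.of_nat j) in *.
  rewrite Z.pow_add_r by lia. fold Y. unfold AZ. fold Y. change (2 ^ 1) with 2.
  assert (Hkj : Z.of_nat (k - j) <= 6) by lia.
  assert (H1 : Z.of_nat (k - j) * (Y + 1) <= 6 * Y + 6) by nia.
  assert (H2 : Z.abs (r + 2 * Z.of_nat p - Z.of_nat j) <= 6) by (destruct (Z.abs_spec r), (Z.abs_spec (r + 2 * Z.of_nat p - Z.of_nat j)); lia).
  destruct (Z.abs_spec U) as [[HU1 HU2]|[HU1 HU2]].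
  - assert (U * (Y * 2) >= 8 * Y) by nia.
    destruct (Z.abs_spec (U * (Y * 2) + (r + 2 * Z.of_nat p - Z.of_nat j))),
      (Z.abs_spec (r + 2 * Z.of_nat p - Z.of_nat j)); lia.
  - assert (U * (Y * 2) <= - 8 * Y) by nia.
    destruct (Z.abs_spec (U * (Y * 2) + (r + 2 * Z.of_nat p - Z.of_nat j))),
      (Z.abs_spec (r + 2 * Z.of_nat p - Z.of_nat j)); lia.
Qed.

Definition valid (s : nat * Z * Z) : Prop :=
  let '(k, u, r) := s in (k <= 6)%nat /\ Z.abs u <= 3 /\ Z.abs r + Z.of_nat k <= 6.

Definition zrange (a : Z) (n : nat) : list Z := map (fun i => a + Z.of_nat i) (seq 0 n).

Lemma in_zrange : forall a n x, a <= x < a + Z.of_nat n -> In x (zrange a n).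
Proof.
  intros a n x H. unfold zrange. apply in_map_iff. exists (Z.to_nat (x - a)).
  split; [lia|]. apply in_seq. lia.
Qed.

Definition states : list (nat * Z * Z) :=
  flat_map (fun k => flat_map (fun u => map (fun r => (k, u, r))
     (zrange (- Z.of_nat (6 - k)) (2 * (6 - k) + 1))) (zrange (-3) 7)) (seq 0 7).

Lemma valid_in : forall s, valid s -> In s states.
Proof.
  intros [[k u] r] (H1 & H2 & H3). unfold states.
  apply in_flat_map. exists k. split; [apply in_seq; lia|].
  apply in_flat_map. exists u. split; [apply in_zrange; destruct (Z.abs_spec u); lia|].
  apply in_map_iff. exists r. split; [reflexivity|]. apply in_zrange.
  destruct (Z.abs_spec r); lia.
Qed.

Definition st_eqb (s s' : nat * Z * Z) : bool :=
  let '(k, u, r) := s in let '(k', u', r') := s' in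
  Nat.eqb k k' && Z.eqb u u' && Z.eqb r r'.

Lemma st_eqb_refl : forall s, st_eqb s s = true.
Proof. intros [[k u] r]. simpl. rewrite Nat.eqb_refl, !Z.eqb_refl. reflexivity. Qed.
Lemma st_eqb_eq : forall s s', st_eqb s s' = true -> s = s'.
Proof.
  intros [[k u] r] [[k' u'] r']. simpl. intros H.
  apply andb_prop in H as [H H3]. apply andb_prop in H as [H1 H2].
  apply Nat.eqb_eq in H1. apply Z.eqb_eq in H2. apply Z.eqb_eq in H3. subst. reflexivity.
Qed.

Fixpoint lookup {B : Type} (d : B) (l : list ((nat * Z * Z) * B)) (s : nat * Z * Z) : B :=
  match l with
  | [] => d
  | (s', v) :: l' => if st_eqb s s' then v else lookup d l' s
  end.

Lemma lookup_map : forall {B : Type} (d : B) (f : nat * Z * Z -> B) l s, In s l ->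
  lookup d (map (fun s => (s, f s)) l) s = f s.
Proof.
  intros B d f l s. induction l as [|x l IH]; simpl; [tauto|].
  intros [<-|H].
  - rewrite st_eqb_refl. reflexivity.
  - destruct (st_eqb s x) eqn:E; [apply st_eqb_eq in E; subst; reflexivity|]. auto.
Qed.

Definition look (t : list ((nat * Z * Z) * Z)) : nat -> Z -> Z -> Z :=
  fun k u r => lookup 0 t (k, u, r).

Fixpoint tabs (m : nat) : list ((nat * Z * Z) * Z) :=
  match m with
  | O => map (fun s => (s, let '(k, u, r) := s in Nv 3 k u r)) states
  | Datatypes.S m' => let t := tabs m' in
      map (fun s => (s, let '(k, u, r) := s in stepF (look t) k u r)) states
  end.

Lemma tabs_0 : tabs 0 = map (fun s => (s, let '(k, u, r) := s in Nv 3 k u r)) states.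
Proof. reflexivity. Qed.
Lemma tabs_S : forall m, tabs (Datatypes.S m) =
  map (fun s => (s, let '(k, u, r) := s in stepF (look (tabs m)) k u r)) states.
Proof. reflexivity. Qed.

Lemma stepF_ext : forall V W k u r,
  (forall k' u' r', valid (k', u', r') -> V k' u' r' = W k' u' r') ->
  valid (k, u, r) -> stepF V k u r = stepF W k u r.
Proof.
  intros V W k u r H (H1 & H2 & H3). unfold stepF.
  apply sum0_ext; intros j Hj. f_equal. apply sum0_ext; intros p Hp. f_equal.
  destruct (Z.leb_spec (Z.abs (2 * u + 2 * Z.of_nat p - Z.of_nat j)) 3); [|reflexivity].
  apply H. repeat split; try lia.
Qed.

Lemma tabs_ok : forall m k u r, valid (k, u, r) -> Nv (m + 3) k u r = look (tabs m) k u r.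
Proof.
  induction m; intros k u r Hv.
  - unfold look. rewrite tabs_0. rewrite (lookup_map 0 (fun s => let '(k, u, r) := s in Nv 3 k u r)).
    reflexivity. apply valid_in; auto.
  - unfold look at 1. rewrite tabs_S.
    rewrite (lookup_map 0 (fun s => let '(k, u, r) := s in stepF (look (tabs m)) k u r)) by (apply valid_in; auto).
    change (Datatypes.S m + 3)%nat with (Datatypes.S (m + 3)).
    destruct Hv as (H1 & H2 & H3).
    rewrite Vrec by lia. apply stepF_ext; [|repeat split; auto].
    intros. apply IHm; auto.
Qed.

(* polynomials in the binomial basis *)
Fixpoint padd (p q : list Z) : list Z :=
  match p, q with
  | [], q => q
  | p, [] => p
  | a :: p', b :: q' => (a + b) :: padd p' q'
  end.
Definition psmul (c : Z) (p : list Z) : list Z := map (fun a => c * a) p.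
Fixpoint evalAt (p : list Z) (t d : nat) : Z :=
  match p with [] => 0 | a :: p' => a * binZ t d + evalAt p' t (Datatypes.S d) end.
Definition evalB p t := evalAt p t 0.

Lemma binZ_0 : forall n, binZ n 0 = 1.
Proof. destruct n; reflexivity. Qed.

Lemma evalAt_padd : forall p q t d, evalAt (padd p q) t d = evalAt p t d + evalAt q t d.
Proof.
  induction p; intros q t d; simpl; [lia|]. destruct q; simpl; [lia|]. rewrite IHp. ring.
Qed.
Lemma evalAt_psmul : forall c p t d, evalAt (psmul c p) t d = c * evalAt p t d.
Proof. induction p; intros t d; simpl; [lia|]. rewrite IHp. ring. Qed.
Lemma evalAt_succ : forall p t d, evalAt p (Datatypes.S t) (Datatypes.S d) = evalAt p t d + evalAt p t (Datatypes.S d).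
Proof. induction p; intros t d; simpl; [lia|]. rewrite IHp. ring. Qed.

Definition pshift (p : list Z) : list Z := padd p (tl p).
Lemma evalB_pshift : forall p t, evalB (pshift p) t = evalB p (Datatypes.S t).
Proof.
  intros [|a p] t; unfold evalB, pshift; [reflexivity|].
  cbn [tl]. rewrite evalAt_padd. cbn [evalAt]. rewrite evalAt_succ, !binZ_0. ring.
Qed.

Lemma evalAt_zero : forall p t d, forallb (fun a => Z.eqb a 0) p = true -> evalAt p t d = 0.
Proof.
  induction p; intros t d H; simpl in *; auto.
  apply andb_prop in H as [H1 H2]. apply Z.eqb_eq in H1. subst. rewrite IHp; auto.
Qed.
Definition peqb (p q : list Z) : bool := forallb (fun a => Z.eqb a 0) (padd p (psmul (-1) q)).
Lemma peqb_eval : forall p q t, peqb p q = true -> evalB p t = evalB q t.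
Proof.
  intros p q t H. unfold peqb in H. apply (evalAt_zero _ t 0) in H.
  unfold evalB. rewrite evalAt_padd, evalAt_psmul in H. lia.
Qed.

Fixpoint sum0P (f : nat -> list Z) (k : nat) : list Z :=
  match k with O => f O | Datatypes.S m => padd (sum0P f m) (f (Datatypes.S m)) end.
Lemma evalB_sum0P : forall f k t, evalB (sum0P f k) t = sum0 (fun j => evalB (f j) t) k.
Proof. induction k; intros t; simpl; auto. unfold evalB in *. rewrite evalAt_padd, IHk. reflexivity. Qed.

Definition stepP (V : nat -> Z -> Z -> list Z) (k : nat) (u r : Z) : list Z :=
  sum0P (fun j => psmul (binZ k j) (sum0P (fun p => psmul (binZ j p)
    (if Z.abs (2 * u + 2 * Z.of_nat p - Z.of_nat j) <=? 3
     then V (k - j)%nat (2 * u + 2 * Z.of_nat p - Z.of_nat j) (r + 2 * Z.of_nat p - Z.of_nat j)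
     else [])) j)) k.

Lemma evalB_stepP : forall V k u r t,
  evalB (stepP V k u r) t = stepF (fun k u r => evalB (V k u r) t) k u r.
Proof.
  intros. unfold stepP, stepF. rewrite evalB_sum0P. apply sum0_ext; intros j _.
  unfold evalB at 1. rewrite evalAt_psmul. f_equal. fold (evalB (sum0P (fun p => psmul (binZ j p)
    (if Z.abs (2 * u + 2 * Z.of_nat p - Z.of_nat j) <=? 3
     then V (k - j)%nat (2 * u + 2 * Z.of_nat p - Z.of_nat j) (r + 2 * Z.of_nat p - Z.of_nat j)
     else [])) j) t).
  rewrite evalB_sum0P. apply sum0_ext; intros p _. unfold evalB. rewrite evalAt_psmul. f_equal.
  destruct (_ <=? 3); reflexivity.
Qed.

Definition Pcert : list ((nat*Z*Z)*list Z) := [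
((0%nat,0,0),[1]);
((1%nat,0,(-5)),[1]);
((1%nat,0,(-3)),[1]);
((1%nat,0,3),[1]);
((1%nat,0,5),[1]);
((2%nat,(-1),(-2)),[1]);
((2%nat,0,(-4)),[2]);
((2%nat,0,(-2)),[2]);
((2%nat,0,0),[16;2]);
((2%nat,0,2),[2]);
((2%nat,0,4),[2]);
((2%nat,1,2),[1]);
((3%nat,(-1),(-3)),[3]);
((3%nat,(-1),1),[3]);
((3%nat,(-1),3),[3]);
((3%nat,0,(-3)),[54;6]);
((3%nat,0,(-1)),[27;3]);
((3%nat,0,1),[27;3]);
((3%nat,0,3),[54;6]);
((3%nat,1,(-3)),[3]);
((3%nat,1,(-1)),[3]);
((3%nat,1,3),[3]);
((4%nat,(-1),(-2)),[88;12]);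
((4%nat,(-1),0),[24]);
((4%nat,(-1),2),[24]);
((4%nat,0,(-2)),[352;48]);
((4%nat,0,0),[776;198;24]);
((4%nat,0,2),[352;48]);
((4%nat,1,(-2)),[24]);
((4%nat,1,0),[24]);
((4%nat,1,2),[88;12]);
((5%nat,(-2),(-1)),[5]);
((5%nat,(-2),1),[5]);
((5%nat,(-1),(-1)),[375;30]);
((5%nat,(-1),1),[625;60]);
((5%nat,0,(-1)),[4670;1130;120]);
((5%nat,0,1),[4670;1130;120]);
((5%nat,1,(-1)),[625;60]);
((5%nat,1,1),[375;30]);
((5%nat,2,(-1)),[5]);
((5%nat,2,1),[5]);
((6%nat,(-2),0),[90]);
((6%nat,(-1),0),[8400;1080]);
((6%nat,0,0),[79540;29240;6480;720]);
((6%nat,1,0),[8400;1080]);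
((6%nat,2,0),[90])].

Definition Pl : nat -> Z -> Z -> list Z := fun k u r => lookup [] Pcert (k, u, r).

Definition cert_check : bool :=
  forallb (fun s => let '(k, u, r) := s in peqb (pshift (Pl k u r)) (stepP Pl k u r)) states.
Lemma cert_check_ok : cert_check = true.
Proof. vm_compute. reflexivity. Qed.

Definition base_check : bool :=
  let t := tabs 5 in
  forallb (fun s => let '(k, u, r) := s in Z.eqb (look t k u r) (evalB (Pl k u r) 0)) states.
Lemma base_check_ok : base_check = true.
Proof. vm_compute. reflexivity. Qed.

Lemma poly_ok : forall t k u r, valid (k, u, r) -> look (tabs (5 + t)) k u r = evalB (Pl k u r) t.
Proof.
  induction t; intros k u r Hv.
  - pose proof base_check_ok as B. unfold base_check in B.
    rewrite forallb_forall in B. specialize (B (k, u, r) (valid_in _ Hv)).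
    apply Z.eqb_eq in B. rewrite Nat.add_0_r. exact B.
  - pose proof cert_check_ok as C. unfold cert_check in C.
    rewrite forallb_forall in C. specialize (C (k, u, r) (valid_in _ Hv)).
    apply (peqb_eval _ _ t) in C. rewrite evalB_pshift in C. rewrite C.
    rewrite Nat.add_succ_r. unfold look at 1. rewrite tabs_S.
    rewrite (lookup_map 0 (fun s => let '(k, u, r) := s in stepF (look (tabs (5 + t))) k u r)) by (apply valid_in; auto).
    rewrite evalB_stepP. apply stepF_ext; auto.
Qed.

Lemma Ntab : forall n k, (3 <= n)%nat -> (k <= 6)%nat -> Ncnt n 0 k = look (tabs (n - 3)) k 0 0.
Proof.
  intros n k Hn Hk. rewrite <- tabs_ok by (repeat split; simpl; lia).
  replace (n - 3 + 3)%nat with n by lia. unfold Nv. f_equal.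
Qed.

Lemma Npoly : forall n k, (8 <= n)%nat -> (k <= 6)%nat -> Ncnt n 0 k = evalB (Pl k 0 0) (n - 8).
Proof.
  intros n k Hn Hk. rewrite Ntab by lia. replace (n - 3)%nat with (5 + (n - 8))%nat by lia.
  apply poly_ok. repeat split; simpl; lia.
Qed.

Lemma binZ_1 : forall t, binZ t 1 = Z.of_nat t.
Proof. induction t; [reflexivity|]. change (binZ (Datatypes.S t) 1) with (binZ t 0 + binZ t 1).
  rewrite binZ_0, IHt. lia. Qed.
Lemma binZ_2 : forall t, 2 * binZ t 2 = Z.of_nat t * (Z.of_nat t - 1).
Proof. induction t; [reflexivity|]. change (binZ (Datatypes.S t) 2) with (binZ t 1 + binZ t 2).
  rewrite binZ_1. rewrite Nat2Z.inj_succ. nia. Qed.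
Lemma binZ_3 : forall t, 6 * binZ t 3 = Z.of_nat t * (Z.of_nat t - 1) * (Z.of_nat t - 2).
Proof. induction t; [reflexivity|]. change (binZ (Datatypes.S t) 3) with (binZ t 2 + binZ t 3).
  pose proof (binZ_2 t). rewrite Nat2Z.inj_succ. nia. Qed.

Lemma N0 : forall n, Ncnt n 0 0 = 1.
Proof. reflexivity. Qed.

Lemma Nodd : forall n k, Nat.odd k = true -> Ncnt n 0 k = 0.
Proof.
  intros n k H. apply Nat.odd_spec in H. destruct H as [q Hq].
  apply (Npar n k 0 (Z.of_nat q)). lia.
Qed.

Lemma N2 : forall n, (1 <= n)%nat -> Ncnt n 0 2 = 2 * Z.of_nat n.
Proof.
  intros n Hn.
  destruct (Nat.lt_ge_cases n 8) as [H|H].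
  - destruct n as [|[|[|[|[|[|[|[|n]]]]]]]]; try lia; try (vm_compute; reflexivity);
      rewrite Ntab by lia; vm_compute; reflexivity.
  - rewrite Npoly by lia. replace (Pl 2 0 0) with [16; 2] by (vm_compute; reflexivity).
    unfold evalB. cbn [evalAt]. rewrite binZ_0, binZ_1. lia.
Qed.

Lemma N4 : forall n, (4 <= n)%nat -> Ncnt n 0 4 = 12 * Z.of_nat n ^ 2 - 6 * Z.of_nat n + 56.
Proof.
  intros n Hn.
  destruct (Nat.lt_ge_cases n 8) as [H|H].
  - destruct n as [|[|[|[|[|[|[|[|n]]]]]]]]; try lia; rewrite Ntab by lia; vm_compute; reflexivity.
  - rewrite Npoly by lia. replace (Pl 4 0 0) with [776; 198; 24] by (vm_compute; reflexivity).
    unfold evalB. cbn [evalAt]. rewrite binZ_0, binZ_1.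
    pose proof (binZ_2 (n - 8)). rewrite Nat2Z.inj_sub in * by lia. nia.
Qed.

Lemma N6 : forall n, (7 <= n)%nat -> Ncnt n 0 6 = 120 * Z.of_nat n ^ 3 + 3200 * Z.of_nat n - 7500.
Proof.
  intros n Hn.
  destruct (Nat.lt_ge_cases n 8) as [H|H].
  - destruct n as [|[|[|[|[|[|[|[|n]]]]]]]]; try lia; rewrite Ntab by lia; vm_compute; reflexivity.
  - rewrite Npoly by lia. replace (Pl 6 0 0) with [79540; 29240; 6480; 720] by (vm_compute; reflexivity).
    unfold evalB. cbn [evalAt]. rewrite binZ_0, binZ_1.
    pose proof (binZ_2 (n - 8)). pose proof (binZ_3 (n - 8)). rewrite Nat2Z.inj_sub in * by lia. nia.
Qed.

End Comb.

Open Scope R_scope.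

Ltac req := match goal with |- ?a = ?b => change (@eq R a b) end.

Fixpoint sumR (f : nat -> R) (n : nat) : R :=
  match n with O => 0 | Datatypes.S m => sumR f m + f (Datatypes.S m) end.

Lemma sumR_ext : forall f g n, (forall i, (1 <= i <= n)%nat -> f i = g i) -> sumR f n = sumR g n.
Proof.
  induction n; intros H; simpl; auto.
  rewrite IHn by (intros; apply H; lia). rewrite H by lia. reflexivity.
Qed.
Lemma sumR_scal : forall c f n, sumR (fun i => c * f i) n = c * sumR f n.
Proof. induction n; simpl; [ring|]. rewrite IHn. ring. Qed.
Lemma sumR_IZR : forall f n, sumR (fun i => IZR (f i)) n = IZR (sumZ f n).
Proof. induction n; simpl; auto. rewrite IHn, plus_IZR. reflexivity. Qed.

Lemma a_AZ : forall i, a i = IZR (AZ i).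
Proof. intros. unfold a, AZ. rewrite plus_IZR, <- pow_IZR. reflexivity. Qed.

Lemma exd_plusR : forall f g x, ex_derive f x -> ex_derive g x -> ex_derive (fun x => f x + g x) x.
Proof. intros. apply (ex_derive_plus f g); auto. Qed.
Lemma exd_scalR : forall c f x, ex_derive f x -> ex_derive (fun x => c * f x) x.
Proof. intros. apply ex_derive_mult; auto. apply ex_derive_const. Qed.

Lemma exd_S : forall n w, ex_derive (S n) w.
Proof.
  induction n; intros w.
  - apply (ex_derive_ext (fun _ => 0)); [reflexivity|]. apply ex_derive_const.
  - apply (ex_derive_ext (fun w => S n w + cos (2 * PI * a (Datatypes.S n) * w))); [reflexivity|].
    apply exd_plusR; [auto|]. auto_derive. auto.
Qed.

Lemma exRI : forall f : R -> R, (forall w, ex_derive f w) -> ex_RInt f 0 1.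
Proof. intros f H. exact (ex_RInt_continuous f 0 1 (fun z _ => ex_derive_continuous f z (H z))). Qed.

Lemma RInt_plusR : forall (f g : R -> R) a b, ex_RInt f a b -> ex_RInt g a b ->
  RInt (fun x => f x + g x) a b = RInt f a b + RInt g a b.
Proof. intros. exact (RInt_plus f g a b H H0). Qed.
Lemma RInt_scalR : forall (f : R -> R) a b l, ex_RInt f a b ->
  RInt (fun x => l * f x) a b = l * RInt f a b.
Proof. intros. exact (RInt_scal f a b l H). Qed.
Lemma RInt_0 : RInt (fun _ => 0) 0 1 = 0.
Proof. rewrite RInt_const. apply Rmult_0_r. Qed.

Lemma exd_cos : forall x w, ex_derive (fun w => cos (2 * PI * x * w)) w.
Proof. intros. auto_derive. auto. Qed.
Lemma exd_Spow : forall n k w, ex_derive (fun w => S n w ^ k) w.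
Proof. intros. apply ex_derive_pow. apply exd_S. Qed.

Ltac exd := lazymatch goal with
 | |- ex_derive (fun w => cos (2 * PI * ?x * w)) _ => apply exd_cos
 | |- ex_derive (fun w => S ?n w ^ ?k) _ => apply exd_Spow
 | |- ex_derive (fun w => @?f w * @?g w) _ => apply (ex_derive_mult f g); exd
 | |- ex_derive (fun w => @?f w + @?g w) _ => apply (exd_plusR f g); exd
 | |- ex_derive (S _) _ => apply exd_S
 | |- ex_derive (fun w => S ?n w) _ => apply exd_S
 | |- ex_derive (fun _ => _) _ => apply ex_derive_const
 end.

Definition Iint (n : nat) (c : Z) (k : nat) : R :=
  RInt (fun w => cos (2 * PI * IZR c * w) * S n w ^ k) 0 1.

Lemma RInt_cos : forall c : Z, RInt (fun w => cos (2 * PI * IZR c * w)) 0 1 = if Z.eqb c 0 then 1 else 0.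
Proof.
  intros c. destruct (Z.eqb_spec c 0).
  - subst. rewrite (RInt_ext _ (fun _ => 1)).
    + rewrite RInt_const. compute; ring.
    + intros. rewrite Rmult_0_r, Rmult_0_l. apply cos_0.
  - assert (Hc : IZR c <> 0) by (apply not_0_IZR; auto).
    assert (HP := PI_RGT_0).
    set (F := fun w => sin (2 * PI * IZR c * w) / (2 * PI * IZR c)).
    assert (Hd : forall x, Rmin 0 1 <= x <= Rmax 0 1 -> is_derive F x (cos (2 * PI * IZR c * x))).
    { intros. unfold F. auto_derive; [exact I|]. field. split; lra. }
    assert (Hct : forall x, Rmin 0 1 <= x <= Rmax 0 1 -> continuous (fun w => cos (2 * PI * IZR c * w)) x).
    { intros x _. exact (ex_derive_continuous _ x (exd_cos (IZR c) x)). }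
    pose proof (is_RInt_derive (V := R_CompleteNormedModule) F _ 0 1 Hd Hct) as H.
    apply is_RInt_unique in H. rewrite H. unfold F.
    rewrite Rmult_0_r, sin_0, Rmult_1_r.
    rewrite (sin_eq_0_1 (2 * PI * IZR c)).
    * unfold minus, plus, opp; simpl. field. split; lra.
    * exists (2 * c)%Z. rewrite mult_IZR. ring.
Qed.

Lemma stepI : forall n c k m,
  RInt (fun w => cos (2 * PI * IZR c * w) * S m w * S n w ^ k) 0 1 =
  sumR (fun i => / 2 * (Iint n (c + AZ i) k + Iint n (c - AZ i) k)) m.
Proof.
  intros n c k m. induction m.
  - simpl sumR. transitivity (RInt (fun _ => 0) 0 1); [|apply RInt_0].
    apply RInt_ext. intros x _. change (S 0 x) with 0. req. ring.
  - simpl sumR. rewrite <- IHm.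
    rewrite (RInt_ext _ (fun w => cos (2 * PI * IZR c * w) * S m w * S n w ^ k +
       / 2 * (cos (2 * PI * IZR (c + AZ (Datatypes.S m)) * w) * S n w ^ k +
              cos (2 * PI * IZR (c - AZ (Datatypes.S m)) * w) * S n w ^ k))).
    + rewrite RInt_plusR, RInt_scalR, RInt_plusR; try reflexivity;
        apply exRI; intros; exd.
    + intros w _. req. change (S (Datatypes.S m) w) with (S m w + cos (2 * PI * a (Datatypes.S m) * w)).
      rewrite a_AZ, plus_IZR, minus_IZR.
      replace (2 * PI * (IZR c + IZR (AZ (Datatypes.S m))) * w) with
        (2 * PI * IZR c * w + 2 * PI * IZR (AZ (Datatypes.S m)) * w) by ring.
      replace (2 * PI * (IZR c - IZR (AZ (Datatypes.S m))) * w) with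
        (2 * PI * IZR c * w - 2 * PI * IZR (AZ (Datatypes.S m)) * w) by ring.
      rewrite cos_plus, cos_minus. field.
Qed.

Lemma I_N : forall n k c, Iint n c k = IZR (Ncnt n c k) / 2 ^ k.
Proof.
  intros n k. induction k; intros c.
  - unfold Iint. simpl pow.
    rewrite (RInt_ext _ (fun w => cos (2 * PI * IZR c * w))) by (intros; req; ring).
    rewrite RInt_cos. cbn [Ncnt]. destruct (c =? 0)%Z; unfold Rdiv; rewrite Rinv_1; ring.
  - unfold Iint. rewrite (RInt_ext _ (fun w => cos (2 * PI * IZR c * w) * S n w * S n w ^ k))
      by (intros; req; simpl; ring).
    rewrite stepI. cbn [Ncnt]. rewrite <- sumR_IZR.
    unfold Rdiv. rewrite Rmult_comm, <- sumR_scal. apply sumR_ext. intros i _.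
    rewrite !IHk, plus_IZR. simpl pow. field. apply pow_nonzero. lra.
Qed.

Definition Ck (k : nat) (f : R -> R) := forall j x, (j <= k)%nat -> ex_derive_n f j x.
Definition sm (f : R -> R) := forall k x, ex_derive_n f k x.

Lemma Dn_S : forall f k x, Derive_n f (Datatypes.S k) x = Derive_n (Derive f) k x.
Proof.
  intros. change (Derive f) with (Derive_n f 1). rewrite (Derive_n_comp f k 1 x).
  f_equal. lia.
Qed.

Lemma Ck_ext : forall k f g, Ck k f -> (forall x, f x = g x) -> Ck k g.
Proof. intros k f g H E j x Hj. apply (ex_derive_n_ext f); auto. Qed.

Lemma Ck_ex : forall k f, Ck (Datatypes.S k) f -> forall x, ex_derive f x.
Proof. intros k f H x. exact (H 1%nat x ltac:(lia)). Qed.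

Lemma Ck_derive : forall k f, Ck (Datatypes.S k) f -> Ck k (Derive f).
Proof.
  intros k f H j x Hj. destruct j as [|j]; [exact I|].
  cbn [ex_derive_n]. apply (ex_derive_ext (Derive_n f (Datatypes.S j))).
  - intros. apply Dn_S.
  - exact (H (Datatypes.S (Datatypes.S j)) x ltac:(lia)).
Qed.

Lemma Ck_from : forall k f, (forall x, ex_derive f x) -> Ck k (Derive f) -> Ck (Datatypes.S k) f.
Proof.
  intros k f H1 H2 j x Hj. destruct j as [|j]; [exact I|].
  destruct j as [|j]; [apply H1|].
  cbn [ex_derive_n]. apply (ex_derive_ext (Derive_n (Derive f) j)).
  - intros. symmetry. apply Dn_S.
  - exact (H2 (Datatypes.S j) x ltac:(lia)).
Qed.

Lemma Ck_le : forall k j f, Ck k f -> (j <= k)%nat -> Ck j f.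
Proof. intros k j f H Hj i x Hi. apply H. lia. Qed.

Lemma Ck_plus : forall k f g, Ck k f -> Ck k g -> Ck k (fun x => f x + g x).
Proof.
  induction k; intros f g Hf Hg.
  - intros j x Hj. replace j with 0%nat by lia. exact I.
  - apply Ck_from.
    + intros x. apply exd_plusR; eapply Ck_ex; eauto.
    + apply (Ck_ext k (fun x => Derive f x + Derive g x)).
      * apply IHk; apply Ck_derive; auto.
      * intros x. symmetry. apply Derive_plus; eapply Ck_ex; eauto.
Qed.

Lemma Ck_mult : forall k f g, Ck k f -> Ck k g -> Ck k (fun x => f x * g x).
Proof.
  induction k; intros f g Hf Hg.
  - intros j x Hj. replace j with 0%nat by lia. exact I.
  - apply Ck_from.
    + intros x. apply ex_derive_mult; [apply (Ck_ex k f Hf) | apply (Ck_ex k g Hg)].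
    + apply (Ck_ext k (fun x => Derive f x * g x + f x * Derive g x)).
      * apply Ck_plus.
        -- apply IHk; [apply Ck_derive; exact Hf | apply (Ck_le (Datatypes.S k)); auto].
        -- apply IHk; [apply (Ck_le (Datatypes.S k)); auto | apply Ck_derive; exact Hg].
      * intros x. symmetry. apply Derive_mult; [apply (Ck_ex k f Hf) | apply (Ck_ex k g Hg)].
Qed.

Lemma sm_Ck : forall f, sm f -> forall k, Ck k f.
Proof. intros f H k j x _. apply H. Qed.
Lemma Ck_sm : forall f, (forall k, Ck k f) -> sm f.
Proof. intros f H k x. apply (H k). lia. Qed.

Lemma sm_mult : forall f g, sm f -> sm g -> sm (fun x => f x * g x).
Proof. intros. apply Ck_sm. intros. apply Ck_mult; apply sm_Ck; auto. Qed.
Lemma sm_plus : forall f g, sm f -> sm g -> sm (fun x => f x + g x).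
Proof. intros. apply Ck_sm. intros. apply Ck_plus; apply sm_Ck; auto. Qed.
Lemma sm_const : forall c, sm (fun _ => c).
Proof.
  intros c k x. destruct k; [exact I|]. cbn [ex_derive_n].
  destruct k; [apply ex_derive_const|].
  apply (ex_derive_ext (fun _ => 0)); [|apply ex_derive_const].
  intros t. rewrite Derive_n_const. reflexivity.
Qed.
Lemma sm_ext : forall f g, sm f -> (forall x, f x = g x) -> sm g.
Proof. intros f g H E k x. apply (ex_derive_n_ext f); auto. Qed.
Lemma sm_derive : forall f, sm f -> sm (Derive f).
Proof. intros. apply Ck_sm. intros. apply Ck_derive. apply sm_Ck. auto. Qed.
Lemma sm_ex : forall f, sm f -> forall x, ex_derive f x.
Proof. intros f H x. exact (H 1%nat x). Qed.
Lemma sm_from : forall f, (forall x, ex_derive f x) -> sm (Derive f) -> sm f.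
Proof.
  intros. apply Ck_sm. intros k. destruct k.
  - intros j x Hj. replace j with 0%nat by lia. exact I.
  - apply Ck_from; auto. apply sm_Ck; auto.
Qed.

Lemma sm_inv : forall f, sm f -> (forall x, f x <> 0) -> sm (fun x => / f x).
Proof.
  intros f Hf Hnz. apply Ck_sm. induction k.
  - intros j x Hj. replace j with 0%nat by lia. exact I.
  - apply Ck_from.
    + intros x. eexists. apply is_derive_inv; [|auto]. apply Derive_correct. apply sm_ex; auto.
    + apply (Ck_ext k (fun x => ((-1) * Derive f x) * (/ f x * / f x))).
      * apply Ck_mult; [|apply Ck_mult; auto].
        apply sm_Ck. apply sm_mult; [apply sm_const|apply sm_derive; auto].
      * intros x. symmetry. apply is_derive_unique.
        eapply is_derive_ext; [intros; reflexivity|].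
        replace ((-1) * Derive f x * (/ f x * / f x)) with (- Derive f x / f x ^ 2)
          by (field; auto).
        apply is_derive_inv; auto. apply Derive_correct. apply sm_ex; auto.
Qed.

Fixpoint sumR0 (f : nat -> R) (k : nat) : R :=
  match k with O => f O | Datatypes.S m => sumR0 f m + f (Datatypes.S m) end.

Lemma sumR0_ext : forall f g k, (forall j, (j <= k)%nat -> f j = g j) -> sumR0 f k = sumR0 g k.
Proof.
  induction k; intros H; simpl; auto.
  rewrite IHk by (intros; apply H; lia). rewrite H by lia. reflexivity.
Qed.
Lemma sumR0_plus : forall f g k, sumR0 (fun i => f i + g i) k = sumR0 f k + sumR0 g k.
Proof. induction k; simpl; [ring|]. rewrite IHk. ring. Qed.
Lemma sumR0_left : forall f k, sumR0 f (Datatypes.S k) = f O + sumR0 (fun j => f (Datatypes.S j)) k.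
Proof. induction k; simpl in *; [ring|]. rewrite IHk. ring. Qed.
Lemma sumR0_first : forall f k, (forall j, (1 <= j <= k)%nat -> f j = 0) -> sumR0 f k = f O.
Proof.
  induction k; intros H; simpl; auto. rewrite IHk by (intros; apply H; lia). rewrite (H (Datatypes.S k)) by lia. ring.
Qed.

Lemma pascalR : forall h k,
  sumR0 (fun j => IZR (binZ k j) * (h j + h (Datatypes.S j))) k =
  sumR0 (fun j => IZR (binZ (Datatypes.S k) j) * h j) (Datatypes.S k).
Proof.
  intros h k.
  rewrite sumR0_left.
  assert (E : sumR0 (fun j => IZR (binZ (Datatypes.S k) (Datatypes.S j)) * h (Datatypes.S j)) k =
     sumR0 (fun j => IZR (binZ k j) * h (Datatypes.S j)) k +
     sumR0 (fun j => IZR (binZ k (Datatypes.S j)) * h (Datatypes.S j)) k).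
  { rewrite <- sumR0_plus. apply sumR0_ext. intros. cbn [binZ]. rewrite plus_IZR. ring. }
  rewrite E.
  assert (E2 : sumR0 (fun j => IZR (binZ k j) * h j) k = h O +
      sumR0 (fun j => IZR (binZ k (Datatypes.S j)) * h (Datatypes.S j)) k).
  { destruct k.
    - cbn [sumR0 binZ]. ring.
    - rewrite (sumR0_left (fun j => IZR (binZ (Datatypes.S k) j) * h j)).
      change (sumR0 (fun j => IZR (binZ (Datatypes.S k) (Datatypes.S j)) * h (Datatypes.S j)) (Datatypes.S k))
        with (sumR0 (fun j => IZR (binZ (Datatypes.S k) (Datatypes.S j)) * h (Datatypes.S j)) k
              + IZR (binZ (Datatypes.S k) (Datatypes.S (Datatypes.S k))) * h (Datatypes.S (Datatypes.S k))).
      rewrite (binZ_big (Datatypes.S k) (Datatypes.S (Datatypes.S k))) by lia.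
      change (binZ (Datatypes.S k) 0) with 1%Z. ring. }
  transitivity (sumR0 (fun j => IZR (binZ k j) * h j) k + sumR0 (fun j => IZR (binZ k j) * h (Datatypes.S j)) k).
  { rewrite <- sumR0_plus. apply sumR0_ext. intros; ring. }
  rewrite E2. change (binZ (Datatypes.S k) 0) with 1%Z. ring.
Qed.

Lemma leibniz : forall k f g x, sm f -> sm g ->
  Derive_n (fun y => f y * g y) k x =
  sumR0 (fun j => IZR (binZ k j) * Derive_n f j x * Derive_n g (k - j) x) k.
Proof.
  induction k; intros f g x Hf Hg.
  - cbn [Derive_n sumR0 binZ Nat.sub]. ring.
  - rewrite Dn_S.
    rewrite (Derive_n_ext _ (fun y => Derive f y * g y + f y * Derive g y)).
    2:{ intros. apply Derive_mult; apply sm_ex; auto. }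
    rewrite Derive_n_plus.
    2,3: apply filter_forall; intros; apply sm_mult; auto; apply sm_derive; auto.
    rewrite !IHk by (auto; apply sm_derive; auto).
    transitivity (sumR0 (fun j => IZR (binZ (Datatypes.S k) j) * (Derive_n f j x * Derive_n g (Datatypes.S k - j) x)) (Datatypes.S k));
      [|apply sumR0_ext; intros; ring].
    rewrite <- (pascalR (fun j => Derive_n f j x * Derive_n g (Datatypes.S k - j) x) k).
    rewrite <- sumR0_plus. apply sumR0_ext. intros j Hj.
    rewrite <- !Dn_S. replace (Datatypes.S k - j)%nat with (Datatypes.S (k - j)) by lia.
    simpl (Datatypes.S k - Datatypes.S j)%nat. ring.
Qed.

Lemma fam_Dn : forall (F : nat -> R -> R), (forall k t, is_derive (F k) t (F (Datatypes.S k) t)) ->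
  forall k j t, Derive_n (F j) k t = F (k + j)%nat t.
Proof.
  intros F HF k. induction k; intros j t; [reflexivity|].
  simpl. rewrite (Derive_ext _ (F (k + j)%nat)) by auto. apply is_derive_unique. apply HF.
Qed.
Lemma fam_sm : forall (F : nat -> R -> R), (forall k t, is_derive (F k) t (F (Datatypes.S k) t)) ->
  forall j, sm (F j).
Proof.
  intros F HF j k x. destruct k; [exact I|]. cbn [ex_derive_n].
  apply (ex_derive_ext (F (k + j)%nat)).
  - intros. symmetry. apply fam_Dn. auto.
  - eexists. apply HF.
Qed.

Definition Dk (n k : nat) (t : R) : R := RInt (fun w => S n w ^ k * exp (t * S n w)) 0 1.

Lemma exd_expS : forall n y w, ex_derive (fun w => exp (y * S n w)) w.
Proof. intros. auto_derive. apply exd_S. Qed.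

Lemma cont2_S : forall n u v, continuity_2d_pt (fun _ v => S n v) u v.
Proof.
  intros. apply (continuity_1d_2d_pt_comp (S n) (fun u v => v)); [|apply continuity_2d_pt_id2].
  apply continuity_pt_filterlim. apply (ex_derive_continuous (S n)). apply exd_S.
Qed.
Lemma cont2_pow : forall g m u v, continuity_2d_pt g u v -> continuity_2d_pt (fun u v => g u v ^ m) u v.
Proof.
  intros g m u v H. induction m.
  - apply (continuity_2d_pt_ext (fun _ _ => 1)); [intros; reflexivity|apply continuity_2d_pt_const].
  - apply (continuity_2d_pt_ext (fun u v => g u v * g u v ^ m)); [intros; reflexivity|].
    apply continuity_2d_pt_mult; auto.
Qed.
Lemma cont2_exp : forall n u v, continuity_2d_pt (fun u v => exp (u * S n v)) u v.
Proof.
  intros. apply (continuity_1d_2d_pt_comp exp (fun u v => u * S n v)).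
  - apply continuity_pt_filterlim. apply (ex_derive_continuous exp). auto_derive. exact I.
  - apply continuity_2d_pt_mult; [apply continuity_2d_pt_id1|apply cont2_S].
Qed.

Lemma is_derive_D : forall n k t, is_derive (Dk n k) t (Dk n (Datatypes.S k) t).
Proof.
  intros n k t.
  assert (HD : forall u v, Derive (fun z => S n v ^ k * exp (z * S n v)) u = S n v ^ (Datatypes.S k) * exp (u * S n v)).
  { intros. apply is_derive_unique. auto_derive; [exact I|]. simpl. ring. }
  assert (H1 : locally t (fun x0 => forall w, Rmin 0 1 <= w <= Rmax 0 1 ->
     ex_derive (fun u => S n w ^ k * exp (u * S n w)) x0)).
  { apply filter_forall. intros. auto_derive. exact I. }
  assert (H2 : forall w, Rmin 0 1 <= w <= Rmax 0 1 ->
     continuity_2d_pt (fun u v => Derive (fun z => S n v ^ k * exp (z * S n v)) u) t w).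
  { intros w _. apply (continuity_2d_pt_ext (fun u v => S n v ^ (Datatypes.S k) * exp (u * S n v))).
    - intros. symmetry. apply HD.
    - apply continuity_2d_pt_mult; [apply cont2_pow, cont2_S | apply cont2_exp]. }
  assert (H3 : locally t (fun y => ex_RInt (fun w => S n w ^ k * exp (y * S n w)) 0 1)).
  { apply filter_forall. intros y. apply exRI. intros w.
    apply ex_derive_mult; [apply exd_Spow|apply exd_expS]. }
  pose proof (is_derive_RInt_param (fun u w => S n w ^ k * exp (u * S n w)) 0 1 t H1 H2 H3) as H.
  unfold Dk. eapply is_derive_ext; [intros; reflexivity|].
  replace (RInt (fun w => S n w ^ Datatypes.S k * exp (t * S n w)) 0 1) with
     (RInt (fun w => Derive (fun u => S n w ^ k * exp (u * S n w)) t) 0 1); [exact H|].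
  apply RInt_ext. intros. rewrite HD. reflexivity.
Qed.

Lemma M_D : forall n t, mgf n t = Dk n 0 t.
Proof. intros. unfold mgf, Dk. apply RInt_ext. intros. req. simpl. ring. Qed.

Lemma M_pos : forall n t, 0 < mgf n t.
Proof.
  intros. unfold mgf. apply RInt_gt_0; [lra| intros; apply exp_pos |].
  intros x _. apply (ex_derive_continuous (fun w => exp (t * S n w))). apply exd_expS.
Qed.

Lemma D_N : forall n j, Dk n j 0 = IZR (Ncnt n 0 j) / 2 ^ j.
Proof.
  intros. rewrite <- I_N. unfold Dk, Iint. apply RInt_ext. intros. req.
  rewrite !Rmult_0_l, Rmult_0_r, Rmult_0_l, exp_0, cos_0. ring.
Qed.

Section Main.
Variable n : nat.
Let D := Dk n.
Let M := mgf n.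
Let g := fun t => D 1 t * / M t.

Lemma HF : forall k t, is_derive (D k) t (D (Datatypes.S k) t).
Proof. apply is_derive_D. Qed.

Lemma sm_M : sm M.
Proof. apply (sm_ext (D 0)); [apply fam_sm, HF|]. intros. symmetry. apply M_D. Qed.

Lemma M_nz : forall t, M t <> 0.
Proof. intros. pose proof (M_pos n t). unfold M. lra. Qed.

Lemma sm_g : sm g.
Proof. apply sm_mult; [apply fam_sm, HF|]. apply sm_inv; [apply sm_M|apply M_nz]. Qed.

Lemma DnM : forall k t, Derive_n M k t = D k t.
Proof.
  intros. rewrite (Derive_n_ext M (D 0)) by (intros; apply M_D).
  rewrite (fam_Dn D HF). f_equal. lia.
Qed.

Lemma kappa_g : forall k, kappa (Datatypes.S k) n = Derive_n g k 0.
Proof.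
  intros. unfold kappa. rewrite Dn_S. apply Derive_n_ext. intros t.
  apply is_derive_unique.
  assert (HM : is_derive M t (D 1 t)).
  { eapply is_derive_ext; [intros; symmetry; apply M_D|]. apply HF. }
  pose proof (is_derive_comp ln M t (/ M t) (D 1 t) (is_derive_ln (M t) (M_pos n t)) HM) as H.
  exact H.
Qed.

Lemma rec : forall k, D (Datatypes.S k) 0 =
  sumR0 (fun j => IZR (binZ k j) * D j 0 * Derive_n g (k - j) 0) k.
Proof.
  intros k.
  transitivity (Derive_n (D 1) k 0).
  { rewrite (fam_Dn D HF). f_equal. lia. }
  rewrite (Derive_n_ext (D 1) (fun t => M t * g t)).
  2:{ intros. unfold g. field. apply M_nz. }
  rewrite leibniz by (apply sm_M || apply sm_g).
  apply sumR0_ext. intros. rewrite DnM. reflexivity.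
Qed.

End Main.

Definition gam n k := Derive_n (fun t => Dk n 1 t * / mgf n t) k 0.

Lemma rec' : forall n k, Dk n (Datatypes.S k) 0 =
  sumR0 (fun j => IZR (binZ k j) * Dk n j 0 * gam n (k - j)) k.
Proof. intros. apply rec. Qed.
Lemma kappa_gam : forall n k, kappa (Datatypes.S k) n = gam n k.
Proof. intros. apply kappa_g. Qed.

Lemma mu_0 : forall n, Dk n 0 0 = 1.
Proof. intros. rewrite D_N, N0. simpl. field. Qed.
Lemma mu_odd : forall n j, Nat.odd j = true -> Dk n j 0 = 0.
Proof. intros. rewrite D_N, Nodd by auto. unfold Rdiv. ring. Qed.

Lemma gam_even : forall n k q, k = (2 * q)%nat -> gam n k = 0.
Proof.
  intros n k. induction k as [k IH] using (well_founded_induction lt_wf). intros q Hq.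
  pose proof (rec' n k) as R.
  rewrite mu_odd in R by (apply Nat.odd_spec; exists q; lia).
  rewrite sumR0_first in R.
  - rewrite mu_0, binZ_0, Nat.sub_0_r in R. lra.
  - intros j Hj. destruct (Nat.Even_or_Odd j) as [[p Hp]|[p Hp]].
    + rewrite (IH (k - j)%nat ltac:(lia) (q - p)%nat ltac:(lia)). ring.
    + rewrite mu_odd by (apply Nat.odd_spec; exists p; lia). ring.
Qed.

Ltac binZc := repeat match goal with
  | H : context [binZ ?a ?b] |- _ =>
      let v := eval vm_compute in (binZ a b) in change (binZ a b) with v in H
  end.

Theorem theoremB' :
  (forall m n : nat, (1 <= n)%nat -> Nat.odd m = true -> kappa m n = 0) /\
  (forall n : nat, (1 <= n)%nat -> kappa 2 n = INR n / 2) /\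
  (forall n : nat, (4 <= n)%nat -> kappa 4 n = (- 3 * INR n + 28) / 8) /\
  (forall n : nat, (7 <= n)%nat ->
     kappa 6 n = (45 * INR n ^ 2 + 380 * INR n - 1875) / 16).
Proof.
  assert (K1 : forall n, (1 <= n)%nat -> gam n 1 = INR n / 2).
  { intros n Hn. pose proof (rec' n 1) as R. cbn [sumR0 Nat.sub] in R. binZc.
    rewrite mu_0, (mu_odd n 1), (gam_even n 0 0) in R by (reflexivity || lia).
    rewrite D_N, N2 in R by lia. rewrite mult_IZR, <- INR_IZR_INZ in R. simpl pow in R. lra. }
  assert (K3 : forall n, (4 <= n)%nat -> gam n 3 = (- 3 * INR n + 28) / 8).
  { intros n Hn. pose proof (rec' n 3) as R. cbn [sumR0 Nat.sub] in R. binZc.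
    rewrite mu_0, (mu_odd n 1), (mu_odd n 3), (gam_even n 0 0), (gam_even n 2 1) in R by (reflexivity || lia).
    rewrite K1 in R by lia.
    rewrite (D_N n 4), (D_N n 2), N2, N4 in R by lia.
    rewrite Z.pow_2_r in R.
    repeat (rewrite plus_IZR in R || rewrite minus_IZR in R || rewrite mult_IZR in R).
    rewrite <- INR_IZR_INZ in R.
    simpl pow in R. lra. }
  split; [|split; [|split]].
  - intros m n _ Hodd. destruct m as [|m]; [discriminate|].
    rewrite kappa_gam. apply Nat.odd_spec in Hodd as [q Hq]. apply (gam_even n m q). lia.
  - intros n Hn. rewrite kappa_gam. auto.
  - intros n Hn. rewrite kappa_gam. auto.
  - intros n Hn. rewrite kappa_gam. pose proof (rec' n 5) as R. cbn [sumR0 Nat.sub] in R. binZc.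
    rewrite mu_0, (mu_odd n 1), (mu_odd n 3), (mu_odd n 5), (gam_even n 0 0), (gam_even n 2 1),
      (gam_even n 4 2) in R by (reflexivity || lia).
    rewrite K1, K3 in R by lia.
    rewrite (D_N n 6), (D_N n 4), (D_N n 2), N2, N4, N6 in R by lia.
    replace (Z.of_nat n ^ 3)%Z with (Z.of_nat n * Z.of_nat n * Z.of_nat n)%Z in R by ring.
    rewrite Z.pow_2_r in R.
    repeat (rewrite plus_IZR in R || rewrite minus_IZR in R || rewrite mult_IZR in R).
    rewrite <- INR_IZR_INZ in R.
    simpl pow in R. simpl pow. lra.
Qed.

Theorem theoremB :
  (forall m n : nat, (1 <= n)%nat -> Nat.odd m = true -> kappa m n = 0) /\
  (forall n : nat, (1 <= n)%nat -> kappa 2 n = INR n / 2) /\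
  (forall n : nat, (4 <= n)%nat -> kappa 4 n = (- 3 * INR n + 28) / 8) /\
  (forall n : nat, (7 <= n)%nat ->
     kappa 6 n = (45 * INR n ^ 2 + 380 * INR n - 1875) / 16).
Proof. exact theoremB'. Qed.
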